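(* For every integer $n\geq2$, \[\left(\zeta_{p^{n+1}}-1\right)^{-2p+2}=p^{-\frac{2}{p^n}}\left(1-(-1)^n\zeta_{2(p-1)}p^{\frac{1}{p^n(p-1)}}-\mathds{1}_3(p)\cdot 3^{\frac{2}{3^n\cdot 2}}\sigma_{n+1}+O\!\left(p^{\frac{2}{p^n(p-1)}}\right)\right),\] where $\mathds{1}_3(p)=1$ if $p=3$ and $0$ otherwise.
   Context: $p\geq 3$ is a prime. $\mathbb{L}_p=W(\bar{\mathbb{F}}_p)((p^{\mathbb{Q}}))$ is the $p$-adic Mal'cev–Neumann field: each element is uniquely $\sum_{x\in\mathbb{Q}}[\alpha_x]p^x$ with $\alpha_x\in\bar{\mathbb{F}}_p$, $[\cdot]$ the Teichmüller lift, and well-ordered support; it is an algebraically closed complete field with valuation $v_p(\alpha)=\min$ of the support ($v_p(p)=1$), and $\bar{\mathbb{Q}}_p$ is regarded as a subfield via a fixed continuous embedding. For $x\in\mathbb{Q}$, $p^x$ denotes $[1]p^x$ (and likewise $3^x$ when $p=3$). For $r\in\mathbb{Q}$, ''$\alpha=\beta+O(p^r)$'' means $v_p(\alpha-\beta)\geq r$; an expression $c\,(\cdots+O(p^r))$ means $c$ times an element of that form. $H_k=\sum_{i=1}^k1/i$. For $n\geq1$, $\sigma_n=\sum_{k=n}^{\infty}p^{-1/p^k}\in\mathbb{L}_p$. Fix a primitive $2(p-1)$-th root of unity $\zeta_{2(p-1)}\in W(\bar{\mathbb{F}}_p)$ and a system $(\zeta_{p^n})_{n\geq1}$ of primitive $p^n$-th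 roots of unity in $\mathbb{L}_p$ with $\zeta_{p^{n+1}}^p=\zeta_{p^n}$, normalized (as established in earlier work of the authors) so that for every $n\geq2$, writing $\zeta=\zeta_{2(p-1)}$, \[\zeta_{p^n}=\sum_{k=0}^{p-1}\frac{(-1)^{nk}}{k!}\zeta^k p^{\frac{k}{p^{n-1}(p-1)}}+\sum_{k=0}^{p-1}\frac{(-1)^{n(k+1)}}{k!}\zeta^{k+1}p^{\frac{k+p}{p^{n-1}(p-1)}}\sigma_n-\sum_{k=1}^{p-1}\frac{H_k}{k!}(-1)^{n(k+1)}\zeta^{k+1}p^{\frac{k+p}{p^{n-1}(p-1)}}+\frac12\zeta^2p^{\frac{2}{p^{n-2}(p-1)}}\sigma_n^2+\frac{(-1)^n}{2}\zeta^3p^{\frac{2}{p^{n-2}(p-1)}-\frac{p-2}{p^n(p-1)}}+O\!\left(p^{\frac{2}{p^{n-2}(p-1)}}\right).\] *)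

(* Defs.v *)
From HB Require Import structures.
From mathcomp Require Import all_boot all_order all_algebra.
Set Implicit Arguments. Unset Strict Implicit. Unset Printing Implicit Defensive.
Import Order.TTheory GRing.Theory Num.Theory.
Local Open Scope ring_scope.

Definition qfrac (a b : nat) : rat := a%:Q / b%:Q.

Section MN.
Variables (L : fieldType) (v : L -> rat).

(* "v_p(x) >= r" (with v_p(0) = +oo) *)
Definition vge (x : L) (r : rat) : Prop := x = 0 \/ r <= v x.

(* "a = b + O(p^r)" *)
Definition bigO_eq (a b : L) (r : rat) : Prop := vge (a - b) r.

Definition is_p_valuation (p : nat) : Prop :=
  [/\ forall x y : L, x != 0 -> y != 0 -> v (x * y) = v x + v y,
      forall (x y : L) (r : rat), vge x r -> vge y r -> vge (x + y) r,
      (p%:R : L) != 0 /\ v p%:R = 1 &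
      forall k : nat, (0 < k)%N -> ~~ (p %| k)%N -> (k%:R : L) != 0 /\ v k%:R = 0].

Variables (p : nat) (pp : rat -> L).

(* pp x = p^x := [1] p^x : a homomorphism Q -> L^x with p^1 = p, v(p^x) = x *)
Definition is_ppow : Prop :=
  [/\ forall x y : rat, pp (x + y) = pp x * pp y,
      pp 1 = p%:R &
      forall x : rat, pp x != 0 /\ v (pp x) = x].

(* sigma_n = sum_{k >= n} p^{-1/p^k}, n >= 1 *)
Definition is_sigma (sigma : nat -> L) : Prop :=
  forall n : nat, (1 <= n)%N ->
    sigma n = pp (- qfrac 1 (p ^ n)) + sigma n.+1 /\
    sigma n != 0 /\ v (sigma n) = - qfrac 1 (p ^ n).

Definition harm (k : nat) : L := \sum_(1 <= i < k.+1) (i%:R)^-1.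

Definition zeta_expansion (z : L) (sigma : nat -> L) (zn : L) (n : nat) : Prop :=
  let D := (p ^ n.-1 * (p - 1))%N in
  let E := qfrac 2 (p ^ (n - 2) * (p - 1)) in
  exists e : L, vge e E /\
  zn =
    \sum_(k < p) (-1) ^+ (n * k) * ((k`!)%:R)^-1 * z ^+ k * pp (qfrac k D)
  + \sum_(k < p) (-1) ^+ (n * k.+1) * ((k`!)%:R)^-1 * z ^+ k.+1
                   * pp (qfrac (k + p) D) * sigma n
  - \sum_(1 <= k < p) harm k * ((k`!)%:R)^-1 * (-1) ^+ (n * k.+1) * z ^+ k.+1
                   * pp (qfrac (k + p) D)
  + 2%:R^-1 * z ^+ 2 * pp E * sigma n ^+ 2
  + (-1) ^+ n * 2%:R^-1 * z ^+ 3 * pp (E - qfrac (p - 2) (p ^ n * (p - 1)))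
  + e.

End MN.

(* Main.v *)
Require Import Defs.
From HB Require Import structures.
From mathcomp Require Import all_boot all_order all_algebra.
From mathcomp Require Import ring lra zify.
Set Implicit Arguments. Unset Strict Implicit. Unset Printing Implicit Defensive.
Import Order.TTheory GRing.Theory Num.Theory.
Local Open Scope ring_scope.

Definition vex (L : fieldType) (v : L -> rat) (x : L) (q : rat) : Prop :=
  x != 0 /\ v x = q.

Lemma vge_eq (L : fieldType) (v : L -> rat) x r s : r = s -> vge v x r -> vge v x s.
Proof. by move->. Qed.

Lemma vex_eq (L : fieldType) (v : L -> rat) x r s : r = s -> vex v x r -> vex v x s.
Proof. by move->. Qed.

Lemma vge_le (L : fieldType) (v : L -> rat) x r s : s <= r -> vge v x r -> vge v x s.
Proof. move=> h [->|h2]; [by left|right; exact: le_trans h2]. Qed.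

Lemma vge0 (L : fieldType) (v : L -> rat) r : vge v 0 r.
Proof. by left. Qed.

Lemma vex_vge (L : fieldType) (v : L -> rat) x q : vex v x q -> vge v x q.
Proof. by case=> _ h; right; rewrite h. Qed.

Lemma v1 (L : fieldType) (v : L -> rat) p : is_p_valuation v p -> v 1 = 0.
Proof.
case=> hM _ _ _; have := hM 1 1 (oner_neq0 _) (oner_neq0 _).
rewrite mulr1 => h; lra.
Qed.

Lemma vN1 (L : fieldType) (v : L -> rat) p : is_p_valuation v p -> v (-1) = 0.
Proof.
move=> hv; have h1 := v1 hv; case: hv => hM _ _ _.
have n1 : (-1 : L) != 0 by rewrite oppr_eq0 oner_neq0.
have := hM _ _ n1 n1; rewrite mulrNN mulr1 h1 => h; lra.
Qed.

Lemma vgeD (L : fieldType) (v : L -> rat) p x y r : is_p_valuation v p ->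
  vge v x r -> vge v y r -> vge v (x + y) r.
Proof. by case=> _ hD _ _; apply: hD. Qed.

Lemma vgeM (L : fieldType) (v : L -> rat) p x y r s : is_p_valuation v p ->
  vge v x r -> vge v y s -> vge v (x * y) (r + s).
Proof.
case=> hM _ _ _ [->|hx]; first by left; rewrite mul0r.
case=> [->|hy]; first by left; rewrite mulr0.
have [->|x0] := eqVneq x 0; first by left; rewrite mul0r.
have [->|y0] := eqVneq y 0; first by left; rewrite mulr0.
right; rewrite hM //; exact: lerD.
Qed.

Lemma vexM (L : fieldType) (v : L -> rat) p x y r s : is_p_valuation v p ->
  vex v x r -> vex v y s -> vex v (x * y) (r + s).
Proof.
case=> hM _ _ _ [x0 hx] [y0 hy]; split; first by rewrite mulf_neq0.
by rewrite hM // hx hy.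
Qed.

Lemma vexN1 (L : fieldType) (v : L -> rat) p : is_p_valuation v p -> vex v (-1) 0.
Proof. by move=> hv; split; [rewrite oppr_eq0 oner_neq0| exact: vN1 hv]. Qed.

Lemma vex1 (L : fieldType) (v : L -> rat) p : is_p_valuation v p -> vex v 1 0.
Proof. by move=> hv; split; [rewrite oner_neq0| exact: v1 hv]. Qed.

Lemma vgeN (L : fieldType) (v : L -> rat) p x r : is_p_valuation v p ->
  vge v x r -> vge v (- x) r.
Proof.
move=> hv hx; rewrite -mulN1r; apply: (vge_eq (add0r r)).
by apply: (vgeM hv) => //; apply: vex_vge; exact: vexN1 hv.
Qed.

Lemma vgeB (L : fieldType) (v : L -> rat) p x y r : is_p_valuation v p ->
  vge v x r -> vge v y r -> vge v (x - y) r.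
Proof. by move=> hv hx hy; apply: (vgeD hv hx); apply: vgeN hv hy. Qed.

Lemma vge_sum (L : fieldType) (v : L -> rat) p (I : Type) (s : seq I) (P : pred I) F r :
  is_p_valuation v p -> (forall i, P i -> vge v (F i) r) ->
  vge v (\sum_(i <- s | P i) F i) r.
Proof.
move=> hv h; apply: (big_ind (fun x => vge v x r)) => //; first exact: vge0.
by move=> x y; apply: vgeD hv.
Qed.

Lemma vge_sum_nat (L : fieldType) (v : L -> rat) p (m n : nat) F r :
  is_p_valuation v p -> (forall i, (m <= i < n)%N -> vge v (F i) r) ->
  vge v (\sum_(m <= i < n) F i) r.
Proof.
move=> hv h; rewrite big_seq_cond.
apply: (big_ind (fun x => vge v x r)); first exact: vge0.
  by move=> x y; apply: vgeD hv.
by move=> i /andP[]; rewrite mem_index_iota => /h.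
Qed.

Lemma vge_nat (L : fieldType) (v : L -> rat) p k : is_p_valuation v p ->
  vge v (k%:R : L) 0.
Proof.
move=> hv; elim: k => [|k IH]; first exact: vge0.
rewrite mulrS; apply: (vgeD hv) => //; exact: vex_vge (vex1 hv).
Qed.

Lemma vgeX (L : fieldType) (v : L -> rat) p x r k : is_p_valuation v p ->
  vge v x r -> vge v (x ^+ k) (k%:Q * r).
Proof.
move=> hv hx; elim: k => [|k IH].
  by rewrite expr0 mul0r; apply: vex_vge (vex1 hv).
rewrite exprS; apply: (vge_eq _ (vgeM hv hx IH)).
by ring.
Qed.

Lemma vexX (L : fieldType) (v : L -> rat) p x r k : is_p_valuation v p ->
  vex v x r -> vex v (x ^+ k) (k%:Q * r).
Proof.
move=> hv hx; elim: k => [|k IH].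
  by rewrite expr0 mul0r; apply: (vex1 hv).
rewrite exprS; apply: (vex_eq _ (vexM hv hx IH)).
by ring.
Qed.

Lemma vexV (L : fieldType) (v : L -> rat) p x r : is_p_valuation v p ->
  vex v x r -> vex v (x^-1) (- r).
Proof.
move=> hv [x0 hx]; have xi0 : x^-1 != 0 by rewrite invr_eq0.
split => //; have h1 := v1 hv; case: hv => hM _ _ _.
have := hM _ _ x0 xi0; rewrite mulfV // h1 hx => h; lra.
Qed.

Lemma vge_div (L : fieldType) (v : L -> rat) p x y r q : is_p_valuation v p ->
  vge v x r -> vex v y q -> vge v (x / y) (r - q).
Proof. by move=> hv hx hy; apply: (vgeM hv hx); apply: vex_vge; exact: vexV hv hy. Qed.

Lemma vex_coprime (L : fieldType) (v : L -> rat) p k : is_p_valuation v p ->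
  (0 < k)%N -> ~~ (p %| k)%N -> vex v (k%:R : L) 0.
Proof. by case=> _ _ _ h k0 hk; have [] := h k k0 hk. Qed.

Lemma not_dvd_fact p k : prime p -> (k < p)%N -> ~~ (p %| k`!)%N.
Proof.
move=> hp; elim: k => [|k IH] hk.
  by rewrite fact0 dvdn1; apply/eqP => h; move: hp; rewrite h.
rewrite factS Euclid_dvdM // negb_or IH ?andbT; last exact: ltnW.
apply/negP => /(dvdn_leq (ltn0Sn k)); rewrite leqNgt hk.
done.
Qed.

Lemma vex_fact (L : fieldType) (v : L -> rat) p k : is_p_valuation v p -> prime p ->
  (k < p)%N -> vex v ((k`!)%:R : L) 0.
Proof. move=> hv hp hk; apply: (vex_coprime hv) => //; first exact: fact_gt0.
exact: not_dvd_fact. Qed.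

Lemma vge_invfact (L : fieldType) (v : L -> rat) p k : is_p_valuation v p -> prime p ->
  (k < p)%N -> vge v (((k`!)%:R : L)^-1) 0.
Proof. move=> hv hp hk; apply: vex_vge; apply: (vex_eq _ (vexV hv (vex_fact hv hp hk))).
by rewrite oppr0. Qed.

Lemma vge_harm (L : fieldType) (v : L -> rat) p k : is_p_valuation v p -> prime p ->
  (k < p)%N -> vge v (harm L k) 0.
Proof.
move=> hv hp hk; rewrite /harm; apply: (vge_sum_nat hv) => i /andP[i1 i2].
apply: vex_vge; apply: (vex_eq _ (vexV hv (vex_coprime hv i1 _))); first by rewrite oppr0.
apply/negP => /(dvdn_leq i1) => h.
have : (i < p)%N by apply: leq_ltn_trans hk.
by rewrite ltnNge h.
Qed.

Lemma vex_1plus (L : fieldType) (v : L -> rat) p T r : is_p_valuation v p ->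
  0 < r -> vge v T r -> vex v (1 + T) 0.
Proof.
move=> hv r0 hT.
have h1 := v1 hv.
have hT0 : vge v T 0 by apply: vge_le hT; exact: ltW.
have hS : vge v (1 + T) 0 by apply: (vgeD hv) => //; exact: vex_vge (vex1 hv).
have n0 : 1 + T != 0.
  apply/negP => /eqP hz; have hT1 : T = -1 by rewrite -[T](addKr 1) hz addr0.
  case: hT; first by rewrite hT1 => /eqP; rewrite oppr_eq0 oner_eq0.
  by rewrite hT1 (vN1 hv) => h; lra.
split => //; case: hS => [/eqP|hS]; first by rewrite (negbTE n0).
have key : forall s, 0 < s -> vge v (1 + T) s -> vge v T s -> False.
  move=> s s0 a b; have := vgeB hv a b; rewrite addrK.
  by case=> [/eqP|]; [rewrite oner_eq0 | rewrite h1 => h; lra].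
apply/eqP; rewrite eq_le hS andbT leNgt; apply/negP => hlt.
have [hle|hgt] := lerP (v (1 + T)) r.
  by apply: (key (v (1 + T))) => //; [right | apply: vge_le hT].
by apply: (key r) => //; right; exact: ltW.
Qed.

Lemma pp0 (L : fieldType) (v : L -> rat) p pp : is_ppow v p pp -> pp 0 = 1.
Proof.
case=> hA _ hV; have [n0 _] := hV 0; have := hA 0 0; rewrite addr0 => h.
by apply: (mulfI n0); rewrite mulr1 -h.
Qed.

Lemma ppN (L : fieldType) (v : L -> rat) p pp x : is_ppow v p pp -> pp (- x) = (pp x)^-1.
Proof.
move=> hpp; have h0 := pp0 hpp; case: hpp => hA _ hV; have [n0 _] := hV x.
have := hA x (- x); rewrite subrr h0 => h.
by apply: (mulfI n0); rewrite mulfV // -h.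
Qed.

Lemma ppX (L : fieldType) (v : L -> rat) p pp x (k : nat) : is_ppow v p pp ->
  pp (k%:Q * x) = pp x ^+ k.
Proof.
move=> hpp; have h0 := pp0 hpp; case: hpp => hA _ _; elim: k => [|k IH].
  by rewrite mul0r expr0.
by rewrite -addn1 PoszD intrD mulrDl mul1r hA IH exprD expr1.
Qed.

Lemma vex_pp (L : fieldType) (v : L -> rat) p pp x : is_ppow v p pp -> vex v (pp x) x.
Proof. by case=> _ _ h; exact: h. Qed.
Lemma QM (a b : nat) : ((a * b)%N)%:Q = a%:Q * b%:Q.
Proof. by rewrite PoszM intrM. Qed.
Lemma QD (a b : nat) : ((a + b)%N)%:Q = a%:Q + b%:Q.
Proof. by rewrite PoszD intrD. Qed.
Lemma QB (a b : nat) : (b <= a)%N -> ((a - b)%N)%:Q = a%:Q - b%:Q.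
Proof. by move=> h; rewrite -subzn // intrB. Qed.
Lemma QXS (a k : nat) : ((a ^ k.+1)%N)%:Q = a%:Q * ((a ^ k)%N)%:Q.
Proof. by rewrite expnS QM. Qed.
Lemma Qle (a b : nat) : (a <= b)%N -> a%:Q <= b%:Q.
Proof. by move=> h; rewrite ler_int lez_nat. Qed.

Theorem proposition2p3
  (p : nat) (hp : prime p) (hp3 : (3 <= p)%N)
  (L : fieldType) (v : L -> rat) (pp : rat -> L)
  (z : L) (sigma : nat -> L) (zeta : nat -> L)
  (hv : is_p_valuation v p)
  (hpp : is_ppow v p pp)
  (hsigma : is_sigma v p pp sigma)
  (hz : (2 * (p - 1)).-primitive_root z)
  (hzeta_prim : forall n : nat, (1 <= n)%N -> (p ^ n).-primitive_root (zeta n))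
  (hzeta_comp : forall n : nat, (1 <= n)%N -> zeta n.+1 ^+ p = zeta n)
  (hzeta_exp : forall n : nat, (2 <= n)%N ->
      zeta_expansion v p pp z sigma (zeta n) n)
  (n : nat) (hn : (2 <= n)%N) :
  exists e : L, vge v e (qfrac 2 (p ^ n * (p - 1))) /\
    (zeta n.+1 - 1) ^- (2 * (p - 1)) =
      pp (- qfrac 2 (p ^ n)) *
      (1 - (-1) ^+ n * z * pp (qfrac 1 (p ^ n * (p - 1)))
         - (if p == 3%N then pp (qfrac 2 (3 ^ n * 2)) else 0) * sigma n.+1
         + e).
Proof.
case: n hn => [|[|n]] // _.
have := hzeta_exp n.+3 isT; rewrite /zeta_expansion /=.
case=> e [he hze].
have p0 : (0 < p)%N by apply: leq_trans hp3.
have p1 : (1 <= p)%N by [].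
have p2 : (2 <= p)%N by apply: ltnW.
set P : rat := p%:Q.
set Q1 : rat := ((p ^ n.+1)%N)%:Q.
have hP3 : 3 <= P by rewrite /P; apply: (Qle hp3).
have hQ1 : 1 <= Q1 by rewrite /Q1; apply: (Qle (a := 1%N)); rewrite expn_gt0 p0.
have hp1 : ((p - 1)%N)%:Q = P - 1 by rewrite QB.
have hp2 : ((p - 2)%N)%:Q = P - 2 by rewrite QB.
set f : rat := (P * P * Q1 * (P - 1))^-1.
have f0 : 0 < f by rewrite /f invr_gt0; apply: mulr_gt0; [apply: mulr_gt0; [nra|lra]|lra].
move: he hze.
have -> : (n.+3 - 2 = n.+1)%N by [].
set D := (p ^ n.+2 * (p - 1))%N.
set d := qfrac 1 D => he hze.
have hDQ : D%:Q = P * Q1 * (P - 1) by rewrite /D QM expnS QM hp1.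
have hd : d = P * f by rewrite /d /qfrac hDQ /f; field; apply/and3P; split; apply/eqP; lra.
have hqk : forall k, qfrac k D = k%:Q * d by move=> k; rewrite /d /qfrac; ring.
have hE : qfrac 2 (p ^ n.+1 * (p - 1)) = 2 * P * P * f.
  rewrite /qfrac QM hp1 -/Q1 /f; field; apply/and3P; split; apply/eqP; lra.
have hs : qfrac 1 (p ^ n.+3) = (P - 1) * f.
  rewrite /qfrac QXS QXS -/Q1 /f; field; apply/and3P; split; apply/eqP; lra.
have h5 : qfrac (p - 2) (p ^ n.+3 * (p - 1)) = (P - 2) * f.
  rewrite /qfrac hp2 QM QXS QXS -/Q1 hp1 /f; field; apply/and3P; split; apply/eqP; lra.
have hN : qfrac 2 (p ^ n.+2) = ((2 * (p - 1))%N)%:Q * d.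
  rewrite hd /qfrac QXS -/Q1 QM hp1 /f; field; apply/and3P; split; apply/eqP; lra.
have d0 : 0 < d by rewrite hd; nra.
have d1 : d <= 1.
  have : d * (P * Q1 * (P - 1)) = 1 by rewrite hd /f; field; apply/and3P; split; apply/eqP; lra.
  have h1 : 3 <= P * Q1 by nra.
  have : 1 <= P * Q1 * (P - 1) by nra.
  move: (P * Q1 * (P - 1)) => X; nra.
set N := (2 * (p - 1))%N.
have N0 : (0 < N)%N by rewrite /N muln_gt0 subn_gt0.
have zN : z ^+ N = 1 by apply: prim_expr_order.
have z0 : z != 0.
  apply/negP => /eqP h; move: zN; rewrite h expr0n (negbTE (lt0n_neq0 N0)).
  by move=> /eqP; rewrite eq_sym oner_eq0.
have vz : vex v z 0.
  have := vexX N hv (conj z0 (erefl (v z))); rewrite zN; case=> _.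
  rewrite (v1 hv) => /esym/eqP; rewrite mulf_eq0 => /orP[|/eqP h]; last by [].
  by rewrite intr_eq0 eqz_nat (negbTE (lt0n_neq0 N0)).
have vzk : forall k, vge v (z ^+ k) 0.
  by move=> k; apply: vex_vge; apply: (vex_eq _ (vexX k hv vz)); rewrite mulr0.
have vsg : forall k, vex v ((-1) ^+ k) 0.
  by move=> k; apply: (vex_eq _ (vexX k hv (vexN1 hv))); rewrite mulr0.
have v2 : vex v (2 : L) 0.
  apply: (vex_coprime hv (k := 2)) => //; apply/negP => /(dvdn_leq (isT : (0 < 2)%N)) h.
  by move: hp3; rewrite ltnNge (leq_trans h).
have vi2 : vge v (2 : L)^-1 0.
  by apply: vex_vge; apply: (vex_eq _ (vexV hv v2)); rewrite oppr0.
set u := pp d.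
set a := (-1) ^+ n.+3 * z * u.
set t := pp (((p - 1)%N)%:Q * d) * sigma n.+3.
have ha : vex v a d.
  apply: (vex_eq _ (vexM hv (vexM hv (vsg _) vz) (vex_pp d hpp))); by rewrite !add0r.
have vsig : vex v (sigma n.+3) (- ((P - 1) * f)).
  by have [_ [s0 sv]] := hsigma n.+3 isT; split => //; rewrite sv hs.
have ht : vex v t ((P - 1) * d - (P - 1) * f).
  by apply: (vex_eq _ (vexM hv (vex_pp _ hpp) vsig)); rewrite hp1.
have htd : vge v t d.
  apply: vge_le (vex_vge ht); rewrite hd.
  have : 0 <= P * P - 3 * P + 1 by nra.
  move: (P * P - 3 * P + 1) => Y hY.
  have : 0 <= f * Y by apply: mulr_ge0 => //; lra.
  nra.
have htd2 : p != 3%N -> vge v t (2 * d).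
  move=> p3; have p5 : (5 <= p)%N.
    have p4 : p != 4%N by apply/eqP => h; move: hp; rewrite h.
    lia.
  have hP5 : 5 <= P by rewrite /P; apply: (Qle p5).
  apply: vge_le (vex_vge ht); rewrite hd.
  have : 0 <= P * P - 4 * P + 1 by nra.
  move: (P * P - 4 * P + 1) => Y hY.
  have : 0 <= f * Y by apply: mulr_ge0 => //; lra.
  nra.
have hS1 : \sum_(k < p) (-1) ^+ (n.+3 * k) / k`!%:R * z ^+ k * pp (qfrac k D)
   = \sum_(k < p) a ^+ k / k`!%:R.
  by apply: eq_bigr => k _; rewrite hqk (ppX d k hpp) exprM /a !exprMn; ring.
have hS2 : \sum_(k < p) (-1) ^+ (n.+3 * k.+1) / k`!%:R * z ^+ k.+1
      * pp (qfrac (k + p) D) * sigma n.+3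
   = \sum_(k < p) a ^+ k.+1 / k`!%:R * t.
  apply: eq_bigr => k _; rewrite hqk.
  have -> : (k + p = k.+1 + (p - 1))%N by lia.
  case: (hpp) => hA _ _.
  rewrite QD mulrDl hA (ppX d k.+1 hpp) exprM /a /t !exprMn; ring.
rewrite hS1 hS2 in hze.
have hR1 : vge v (\sum_(k < p) a ^+ k / k`!%:R - (1 + a + a ^+ 2 / 2)) (3 * d).
  rewrite -(big_mkord xpredT (fun k => a ^+ k / k`!%:R)) big_ltn // big_ltn // big_ltn //.
  rewrite (_ : 0`!%:R = 1 :> L) // (_ : 2`!%:R = 2 :> L) //.
  rewrite expr0 expr1 invr1 !mulr1.
  rewrite (_ : forall x y w X : L, x + (y + (w + X)) - (x + y + w) = X); last by move=> *; ring.
  apply: (vge_sum_nat hv) => i /andP[i3 ip].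
  apply: vge_le (vgeM hv (vex_vge (vexX i hv ha)) (vge_invfact hv hp ip)).
  have : 3 <= i%:Q by apply: (Qle i3).
  nra.
have hR2 : vge v (\sum_(k < p) a ^+ k.+1 / k`!%:R * t - a * t) (3 * d).
  rewrite -(big_mkord xpredT (fun k => a ^+ k.+1 / k`!%:R * t)) big_ltn //.
  rewrite (_ : 0`!%:R = 1 :> L) // expr1 invr1 mulr1.
  rewrite (_ : forall x X : L, x + X - x = X); last by move=> *; ring.
  apply: (vge_sum_nat hv) => i /andP[i1 ip].
  apply: vge_le (vgeM hv (vgeM hv (vex_vge (vexX i.+1 hv ha)) (vge_invfact hv hp ip)) htd).
  have : 2 <= i.+1%:Q by apply: (Qle (a := 2%N)).
  nra.
have hR3 : vge v (\sum_(1 <= k < p) harm L k / k`!%:R * (-1) ^+ (n.+3 * k.+1)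
      * z ^+ k.+1 * pp (qfrac (k + p) D)) (3 * d).
  apply: (vge_sum_nat hv) => k /andP[k1 kp].
  apply: vge_le (vgeM hv (vgeM hv (vgeM hv (vgeM hv (vge_harm hv hp kp)
     (vge_invfact hv hp kp)) (vex_vge (vsg _))) (vzk _)) (vex_vge (vex_pp _ hpp))).
  rewrite hqk QD.
  have : 1 <= k%:Q by apply: (Qle k1).
  rewrite -/P; nra.
have hR4 : vge v (2^-1 * z ^+ 2 * pp (qfrac 2 (p ^ n.+1 * (p - 1))) * sigma n.+3 ^+ 2)
    (3 * d).
  apply: vge_le (vgeM hv (vgeM hv (vgeM hv vi2 (vzk 2)) (vex_vge (vex_pp _ hpp)))
     (vex_vge (vexX 2 hv vsig))).
  rewrite hE hd.
  have : 0 <= 2 * P * P - 5 * P + 2 by nra.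
  move: (2 * P * P - 5 * P + 2) => Y hY.
  have : 0 <= f * Y by apply: mulr_ge0 => //; lra.
  rewrite (_ : (2%N)%:Q = 2) //.
  nra.
have hR5 : vge v ((-1) ^+ n.+3 / 2 * z ^+ 3 * pp (qfrac 2 (p ^ n.+1 * (p - 1))
    - qfrac (p - 2) (p ^ n.+3 * (p - 1)))) (3 * d).
  apply: vge_le (vgeM hv (vgeM hv (vgeM hv (vex_vge (vsg _)) vi2) (vzk 3))
     (vex_vge (vex_pp _ hpp))).
  rewrite hE h5 hd.
  have : 0 <= 2 * P * P - 4 * P + 2 by nra.
  move: (2 * P * P - 4 * P + 2) => Y hY.
  have : 0 <= f * Y by apply: mulr_ge0 => //; lra.
  nra.
have hRe : vge v e (3 * d).
  apply: vge_le he; rewrite hE hd.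
  have : 0 <= P * (2 * P - 3) by nra.
  move: (P * (2 * P - 3)) => Y hY.
  have : 0 <= f * Y by apply: mulr_ge0 => //; lra.
  nra.
have [R [hR hw]] : exists R, vge v R (3 * d) /\ zeta n.+3 - 1 = a + a ^+ 2 / 2 + a * t + R.
  exists (zeta n.+3 - 1 - (a + a ^+ 2 / 2 + a * t)); split; last by ring.
  rewrite hze.
  rewrite (_ : forall s1 s2 s3 s4 s5 e x y w : L, s1 + s2 - s3 + s4 + s5 + e - 1 - (x + y + w)
     = s1 - (1 + x + y) + (s2 - w) - s3 + s4 + s5 + e); last by move=> *; ring.
  apply: (vgeD hv _ hRe); apply: (vgeD hv _ hR5); apply: (vgeD hv _ hR4).
  apply: (vgeB hv _ hR3); exact: (vgeD hv hR1 hR2).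
clear hze hR1 hR2 hR3 hR4 hR5 hRe hS1 hS2.
have a0 : a != 0 by case: ha.
have two0 : (2 : L) != 0 by case: v2.
set X := a / 2 + t + R / a.
have hX : vge v X d.
  apply: (vgeD hv); first apply: (vgeD hv) => //.
    by apply: vge_le (vgeM hv (vex_vge ha) vi2); lra.
  by apply: vge_le (vge_div hv hR ha); lra.
have hwX : zeta n.+3 - 1 = a * (1 + X).
  by rewrite hw /X; field; rewrite a0 two0.
set T := (1 + X) ^+ N - 1.
have hN2 : N = N.-2.+2 by rewrite /N; lia.
have he2 : vge v (T - N%:R * X) (2 * d).
  rewrite /T [1 + X]addrC exprD1n hN2 big_ord_recl big_ord_recl.
  rewrite /= bin0 bin1 expr0 expr1 mulr1n.
  rewrite (_ : forall (x S : L) (k : nat), 1 + (x *+ k + S) - 1 - k%:R * x = S);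
    last by move=> *; rewrite mulr_natl; ring.
  apply: (big_ind (fun x => vge v x (2 * d))); first exact: vge0.
    by move=> x y; apply: vgeD hv.
  move=> i _; rewrite -mulr_natr.
  apply: vge_le (vgeM hv (vgeX _ hv hX) (vge_nat _ hv)).
  have : (2 <= bump 0 (bump 0 i))%N by [].
  move=> /Qle h2; rewrite addr0.
  have : 2 <= ((2%N)%:Q : rat) by []. nra.
clear hN2.
have hT : vge v T d.
  rewrite (_ : T = N%:R * X + (T - N%:R * X)); last by ring.
  apply: (vgeD hv); first by apply: vge_le (vgeM hv (vge_nat _ hv) hX); lra.
  by apply: vge_le he2; lra.
have h1T : vex v (1 + T) 0 := vex_1plus hv d0 hT.
have h1T0 : 1 + T != 0 by case: h1T.
have h1TX : (1 + X) ^+ N = 1 + T by rewrite /T; ring.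
have haN : a ^+ N = pp (qfrac 2 (p ^ n.+2)).
  rewrite /a exprMn exprMn zN mulr1 -exprM mulnC exprM /N exprM sqrrN !expr1n mul1r.
  by rewrite hN (ppX d _ hpp).
have hNr : (N%:R : L) = 2 * (p%:R - 1) by rewrite /N natrM natrB.
set c := (if p == 3%N then pp (qfrac 2 (3 ^ n.+2 * 2)) else 0).
exists ((1 + T)^-1 - 1 - a + c * sigma n.+3); split; last first.
  rewrite hwX exprMn h1TX haN (ppN _ hpp) invfM.
  rewrite (_ : (-1) ^+ n.+2 * z * u = - a); last by rewrite /a (exprS _ n.+2); ring.
  ring.
rewrite (_ : (1 + T)^-1 - 1 - a + c * sigma n.+3 =
   T ^+ 2 * (1 + T)^-1 - p%:R * a + (c * sigma n.+3 - N%:R * t)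
   - N%:R * (R / a) - (T - N%:R * X)); last first.
  by rewrite /X hNr; field; rewrite h1T0 a0 two0.
rewrite hqk.
have [pn0 vp] : (p%:R : L) != 0 /\ v p%:R = 1 by case: hv.
apply: vge_le (_ : (2%N)%:Q * d <= 2 * d) _; first by [].
apply: (vgeB hv); last by [].
apply: (vgeB hv); last first.
  by apply: vge_le (vgeM hv (vge_nat _ hv) (vge_div hv hR ha)); lra.
apply: (vgeD hv); last first.
  rewrite /c; case: eqP => [p3|p3].
    have hc : qfrac 2 (3 ^ n.+2 * 2) = ((p - 1)%N)%:Q * d.
      rewrite hd hp1 /f /P /Q1 p3 /qfrac QM QXS; field.
        by rewrite ?intr_eq0 ?pnatr_eq0 ?eqz_nat expn_eq0.
    rewrite hc -/t (_ : t - N%:R * t = - (p%:R * t)); last by rewrite hNr p3; ring.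
    apply: (vgeN hv); apply: vge_le (vgeM hv (vex_vge (conj pn0 vp)) htd); lra.
  rewrite mul0r add0r; apply: (vgeN hv).
  apply: vge_le (vgeM hv (vge_nat _ hv) (htd2 (introN eqP p3))); lra.
apply: (vgeB hv).
  by apply: vge_le (vgeM hv (vgeX 2 hv hT) (vex_vge (vexV hv h1T))); rewrite oppr0 addr0.
by apply: vge_le (vgeM hv (vex_vge (conj pn0 vp)) (vex_vge ha)); lra.
Qed.
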